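(* In the two-period scalar linear structural model described in the context, satisfying (A1)–(A5), additionally matching on the pre-treatment outcome always (weakly) reduces the first-order variance relative to matching only on the observed covariate: $\mathrm{Var}(\hat\tau^{X}_{\mathrm{DiD}})\ge\mathrm{Var}(\hat\tau^{X,Y_0}_{\mathrm{DiD}})$.
   Context: Setting: $n$ units $i=1,\dots,n$; binary treatment indicator $Z_i\in\{0,1\}$; two periods $t=0$ (pre-treatment) and $t=1$ (post-treatment; treatment is received only at $t=1$). Let $n_1=\sum_i Z_i$, $n_0=n-n_1$, with $n_0\ge n_1\ge 1$. Each unit has a time-invariant latent variable $\theta_i\in\mathbb{R}$ and observed covariate $X_i\in\mathbb{R}$. Potential outcomes: $Y_{i,t}(0)=\beta_{0,t}+\beta_{\theta,t}\theta_i+\beta_{x,t}X_i+\epsilon_{i,t}$, $Y_{i,t}(1)=Y_{i,t}(0)+\tau\,\mathbf{1}(t=1)$, with fixed constants; observed $Y_{i,t}=Z_iY_{i,t}(1)+(1-Z_i)Y_{i,t}(0)$. Assumptions: (A1) $(Y_{i,0},Y_{i,1},Z_i,\theta_i,X_i)$ i.i.d. across $i$. (A2) $\epsilon_{i,t}$ independent of $(\theta_i,X_i,Z_i)$, mean $0$, variance $\sigma_E^2>0$, independent across $t$, finite fourth moment. (A3) $\mathbb{E}[\theta_i\mid Z_i=z]=\mu_{\theta,z}$, $\mathbb{E}[X_i\mid Z_i=z]=\mu_{x,z}$; $\mathrm{Var}(\theta_i\mid Z_i=z)=\sigma_\theta^2>0$, $\mathrm{Var}(X_i\mid Z_i=z)=\sigma_x^2>0$,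 $\mathrm{Cov}(\theta_i,X_i\mid Z_i=z)=\rho\sigma_\theta\sigma_x$, independent of $z$; finite fourth moments of $\theta_i,X_i$. (A4) $n_1/n\to p\in(0,1/2]$ in probability, $p=\mathbb{P}(Z_i=1)$. (A5) Matching on $W_i$: an injective map $\mathcal{M}$ from treated units to control units with image $\mathcal{C}'$ of size $n_1$, with $\frac1{n_1}\sum_{i\text{ treated}}\|W_{\mathcal{M}(i)}-W_i\|_2=o_p(n^{-1/2})$ and $\frac1{n_1}\sum_{i\text{ treated}}\|W_{\mathcal{M}(i)}-W_i\|_2^2=o_p(n^{-1})$; $M_i=\mathbf{1}(i\in\mathcal{C}')$. Estimators: $\hat\tau^{X}_{\mathrm{DiD}}=\frac1{n_1}\sum_i(Y_{i,1}-Y_{i,0})Z_i-\frac1{n_1}\sum_i(Y_{i,1}-Y_{i,0})M_i$ with matching on $W_i=X_i$; $\hat\tau^{X,Y_0}_{\mathrm{DiD}}=\frac1{n_1}\sum_iY_{i,1}Z_i-\frac1{n_1}\sum_iY_{i,1}M_i$ with matching on $W_i=(X_i,Y_{i,0})$. Convention: variances are first-order: ''$\mathrm{Var}(\hat\tau)=V$'' means $\mathrm{Var}(\hat\tau)=V+o_p(n^{-1})$ with the realized $n_1$ treated as given; comparisons of variances are comparisons of these leading-order expressions. *)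

(* Defs.v *)
From HB Require Import structures.
From mathcomp Require Import all_boot all_order all_algebra.
Set Implicit Arguments. Unset Strict Implicit. Unset Printing Implicit Defensive.
Import Order.TTheory GRing.Theory Num.Theory.
Local Open Scope ring_scope.

(* A random variable that is a linear combination
      c_th * theta + c_x * X + c_0 * eps_0 + c_1 * eps_1
   (constants and the treatment effect are dropped: they do not affect
   (co)variances).  Within each treatment arm, (A2)-(A3) fix the covariance
   structure of (theta, X, eps_0, eps_1), identical across arms. *)
Record lincomb (R : Type) := LC { c_th : R; c_x : R; c_0 : R; c_1 : R }.

Section Model.
Variable R : realFieldType.

Definition cov (sth sx rho sE : R) (u v : lincomb R) : R :=
  c_th u * c_th v * sth ^+ 2
  + (c_th u * c_x v + c_x u * c_th v) * (rho * sth * sx)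
  + c_x u * c_x v * sx ^+ 2
  + c_0 u * c_0 v * sE ^+ 2
  + c_1 u * c_1 v * sE ^+ 2.

Definition Xv : lincomb R := LC 0 1 0 0.
Definition Y0v (bth0 bx0 : R) : lincomb R := LC bth0 bx0 1 0.
Definition Y1v (bth1 bx1 : R) : lincomb R := LC bth1 bx1 0 1.
Definition diffv (u v : lincomb R) : lincomb R :=
  LC (c_th u - c_th v) (c_x u - c_x v) (c_0 u - c_0 v) (c_1 u - c_1 v).

(* within-arm residual variance of O after (linear) adjustment for one
   matching variable W *)
Definition resvar1 (sth sx rho sE : R) (O W : lincomb R) : R :=
  let C := cov sth sx rho sE in
  C O O - (C O W) ^+ 2 / C W W.

(* within-arm residual variance of O after adjustment for two matching
   variables (W1, W2): Var(O) - c' S^{-1} c  with S = Var(W1,W2) *)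
Definition resvar2 (sth sx rho sE : R) (O W1 W2 : lincomb R) : R :=
  let C := cov sth sx rho sE in
  let a := C W1 W1 in let b := C W1 W2 in let d := C W2 W2 in
  let p := C O W1 in let q := C O W2 in
  C O O - (d * p ^+ 2 - 2 * b * p * q + a * q ^+ 2) / (a * d - b ^+ 2).

(* first-order variance of  (1/n1) sum_treated O_i - (1/n1) sum_matched O_i
   when matching makes the matching variables asymptotically equal:
   each of the two arms contributes (residual variance)/n1. *)
Definition var_DiD_X (n1 : nat) (sth sx rho sE bth0 bth1 bx0 bx1 : R) : R :=
  2 * resvar1 sth sx rho sE (diffv (Y1v bth1 bx1) (Y0v bth0 bx0)) Xv / n1%:R.

Definition var_DiD_XY0 (n1 : nat) (sth sx rho sE bth0 bth1 bx0 bx1 : R) : R :=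
  2 * resvar2 sth sx rho sE (Y1v bth1 bx1) Xv (Y0v bth0 bx0) / n1%:R.

End Model.

(* Main.v *)
Require Import Defs.
From HB Require Import structures.
From mathcomp Require Import all_boot all_order all_algebra.
From mathcomp Require Import ring lra.
Import Order.TTheory GRing.Theory Num.Theory.
Local Open Scope ring_scope.

Lemma key (R : realFieldType) (a b d p q e : R) : 0 < a -> 0 < a*d - b^+2 ->
  e - (d * p^+2 - 2 * b * p * q + a * q^+2)/(a*d-b^+2)
  <= (e - 2*q + d) - (p-b)^+2/a.
Proof.
move=> ha hD; rewrite -subr_ge0.
have -> : (e - 2*q + d) - (p-b)^+2/a
   - (e - (d * p^+2 - 2 * b * p * q + a * q^+2)/(a*d-b^+2))
   = (a*(q-d) - b*(p-b))^+2/(a*(a*d-b^+2)).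
  by field; apply/andP; split; rewrite ?mulf_neq0 // ?lt0r_neq0 // gt_eqF.
by rewrite divr_ge0 ?sqr_ge0 // mulr_ge0 // ltW.
Qed.

Theorem lemma3p3 (R : realFieldType) (n n1 : nat)
  (sth sx rho sE bth0 bth1 bx0 bx1 : R) :
  (0 < n1)%N -> (n1 <= n - n1)%N ->
  0 < sth -> 0 < sx -> -1 <= rho <= 1 -> 0 < sE ->
  var_DiD_XY0 n1 sth sx rho sE bth0 bth1 bx0 bx1
    <= var_DiD_X n1 sth sx rho sE bth0 bth1 bx0 bx1.
Proof.
move=> _ _ hth hx /andP[r1 r2] hE.
rewrite /var_DiD_XY0 /var_DiD_X.
apply: ler_wpM2r; first by rewrite invr_ge0 ler0n.
apply: ler_wpM2l; first by [].
rewrite /resvar1 /resvar2.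
set C := cov sth sx rho sE.
set O := (Defs.diffv (Y1v bth1 bx1) (Y0v bth0 bx0)).
have hOO : C O O = C (Y1v bth1 bx1) (Y1v bth1 bx1) - 2 * C (Y1v bth1 bx1) (Y0v bth0 bx0)
   + C (Y0v bth0 bx0) (Y0v bth0 bx0) by rewrite /C /cov /=; ring.
have hOX : C O (Xv R) = C (Y1v bth1 bx1) (Xv R) - C (Xv R) (Y0v bth0 bx0) by rewrite /C /cov /=; ring.
rewrite hOO hOX; apply: key.
  have -> : C (Xv R) (Xv R) = sx^+2 by rewrite /C /cov /=; ring.
  exact: exprn_gt0.
have -> : C (Xv R) (Xv R) * C (Y0v bth0 bx0) (Y0v bth0 bx0) - C (Xv R) (Y0v bth0 bx0) ^+ 2
  = sx^+2 * (bth0^+2 * sth^+2 * (1 - rho^+2) + sE^+2) by rewrite /C /cov /=; ring.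
apply: mulr_gt0; first exact: exprn_gt0.
apply: ltr_pwDr; first exact: exprn_gt0.
apply: mulr_ge0; first by rewrite mulr_ge0 ?sqr_ge0.
by rewrite subr_ge0; nra.
Qed.
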